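(* Let $\gamma>0$, $\Omega=(0,\pi)$, and let $\mathcal{W}$ be the generator of the weakly coupled thermoelastic system, acting on $\mathcal{H}=L^2(\Omega)^3$ by \[ \mathcal{W}\begin{pmatrix} w\\ v\\ \theta\end{pmatrix}=\begin{pmatrix} \partial_x v\\ \partial_x w-\gamma\theta\\ \gamma v+\partial_x^2\theta\end{pmatrix}, \] where $(w,v,\theta)=(\partial_x u,\partial_t u,\theta)$, with domain encoding any one of the following boundary conditions at $x=0,\pi$: (1) $u=0$ and $\theta=0$; (2) $u=0$ and $\partial_x\theta=0$; (3) $\partial_x u=0$ and $\theta=0$; (4) $\partial_x u=0$ and $\partial_x\theta=0$. Then, for each of these four boundary conditions, the spectrum of $\mathcal{W}$ asymptotically lies along the imaginary axis and the negative real axis: every eigenvalue $\lambda$ of $\mathcal{W}$ with sufficiently large $|\lambda|$ satisfies \[ \lambda\sim i n\qquad\text{or}\qquad \lambda\sim -n^{2} \] for some large integer $n$.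
   Context: This operator corresponds to the weakly coupled thermoelastic system $\partial_t^2u-\partial_x^2u+\gamma\theta=0$, $\partial_t\theta-\partial_x^2\theta-\gamma\partial_t u=0$ on $(0,\pi)\times(0,\infty)$. The spectrum of $\mathcal{W}$ consists of eigenvalues only ($\mathcal{W}^{-1}$ is compact). The notation $\lambda\sim \mu_n$ means that $\lambda$ is asymptotically equal to $\mu_n$ as $|\lambda|\to\infty$. *)

(* Defs.v *)
From Stdlib Require Import Reals.
From Coquelicot Require Import Coquelicot.

Open Scope R_scope.

(* The four boundary conditions at x = 0, pi:
   BC_DD : u = 0 and theta = 0
   BC_DN : u = 0 and d_x theta = 0
   BC_ND : d_x u = 0 and theta = 0
   BC_NN : d_x u = 0 and d_x theta = 0
   In the first-order variables (w, v, theta) = (u_x, u_t, theta),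
   "u = 0" becomes v = 0 and "d_x u = 0" becomes w = 0. *)
Inductive bc := BC_DD | BC_DN | BC_ND | BC_NN.

Definition u_dirichlet (b : bc) : bool :=
  match b with BC_DD | BC_DN => true | _ => false end.
Definition theta_dirichlet (b : bc) : bool :=
  match b with BC_DD | BC_ND => true | _ => false end.

Definition W_eigenvalue (gamma : R) (b : bc) (lam : C) : Prop :=
  exists (w v th w' v' th' th'' : R -> C),
    (forall x, 0 <= x <= PI ->
       is_derive w x (w' x) /\ is_derive v x (v' x) /\
       is_derive th x (th' x) /\ is_derive th' x (th'' x)) /\
    (forall x, 0 < x < PI ->
       v' x = (lam * w x)%C /\
       (w' x - RtoC gamma * th x)%C = (lam * v x)%C /\
       (RtoC gamma * v x + th'' x)%C = (lam * th x)%C) /\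
    (if u_dirichlet b then v 0 = 0%C /\ v PI = 0%C
     else w 0 = 0%C /\ w PI = 0%C) /\
    (if theta_dirichlet b then th 0 = 0%C /\ th PI = 0%C
     else th' 0 = 0%C /\ th' PI = 0%C) /\
    (exists x, 0 < x < PI /\ (w x <> 0%C \/ v x <> 0%C \/ th x <> 0%C)).

(* Main.v *)
Require Import Defs.
From Stdlib Require Import Reals Lra.
From Coquelicot Require Import Coquelicot.
Open Scope R_scope.

Lemma der_fst (f : R -> C) x l : is_derive f x l -> is_derive (fun y => fst (f y)) x (fst l).
Proof.
  intros H. unfold is_derive in *.
  pose proof (filterdiff_comp f (fun t : prod_NormedModule R_AbsRing R_NormedModule R_NormedModule => fst t) _ _ H (filterdiff_linear _ is_linear_fst)) as K.
  apply (filterdiff_ext_lin _ _ _ K). intros y. simpl. reflexivity.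
Qed.
Lemma der_snd (f : R -> C) x l : is_derive f x l -> is_derive (fun y => snd (f y)) x (snd l).
Proof.
  intros H. unfold is_derive in *.
  pose proof (filterdiff_comp f (fun t : prod_NormedModule R_AbsRing R_NormedModule R_NormedModule => snd t) _ _ H (filterdiff_linear _ is_linear_snd)) as K.
  apply (filterdiff_ext_lin _ _ _ K). intros y. simpl. reflexivity.
Qed.

Lemma dmul (f g : R -> R) x df dg : is_derive f x df -> is_derive g x dg ->
  is_derive (fun t => f t * g t) x (df * g x + f x * dg).
Proof. intros H1 H2. apply is_derive_Reals. apply is_derive_Reals in H1, H2.
  exact (derivable_pt_lim_mult f g x df dg H1 H2). Qed.
Lemma dplus (f g : R -> R) x df dg : is_derive f x df -> is_derive g x dg ->
  is_derive (fun t => f t + g t) x (df + dg).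
Proof. intros H1 H2. apply is_derive_Reals. apply is_derive_Reals in H1, H2.
  exact (derivable_pt_lim_plus f g x df dg H1 H2). Qed.
Lemma dminus (f g : R -> R) x df dg : is_derive f x df -> is_derive g x dg ->
  is_derive (fun t => f t - g t) x (df - dg).
Proof. intros H1 H2. apply is_derive_Reals. apply is_derive_Reals in H1, H2.
  exact (derivable_pt_lim_minus f g x df dg H1 H2). Qed.
Lemma dscal (c : R) (f : R -> R) x df : is_derive f x df ->
  is_derive (fun t => c * f t) x (c * df).
Proof. intros H1. apply is_derive_Reals. apply is_derive_Reals in H1.
  exact (derivable_pt_lim_scal f c x df H1). Qed.

Lemma const_lemma (G dG : R -> R) : (forall x, 0<=x<=PI -> is_derive G x (dG x)) -> (forall x, 0<x<PI -> 0 <= dG x) -> G 0 = G PI -> forall x, 0<x<PI -> dG x = 0.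
Proof.
  intros HD Hpos HE.
  assert (mono : forall x y, 0 <= x -> x < y -> y <= PI -> G x <= G y).
  { intros x y Hx Hxy Hy.
    destruct (MVT_cor2 G dG x y Hxy) as [c [Hc1 Hc2]].
    - intros c Hc. apply is_derive_Reals. apply HD. lra.
    - assert (0 <= dG c) by (apply Hpos; lra). nra. }
  assert (PI_pos := PI_RGT_0).
  assert (Hc : forall y, 0 < y < PI -> G y = G 0).
  { intros y Hy. assert (G 0 <= G y) by (apply mono; lra).
    assert (G y <= G PI) by (apply mono; lra). lra. }
  intros x Hx.
  assert (H1 : is_derive G x 0).
  { apply (is_derive_ext_loc (fun _ => G 0)).
    - apply (locally_interval _ x 0 PI); simpl; try lra.
      intros y Hy1 Hy2. symmetry. apply Hc. simpl in *. lra.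
    - apply is_derive_Reals. apply derivable_pt_lim_const. }
  pose proof (is_derive_unique _ _ _ H1) as U1.
  pose proof (is_derive_unique _ _ _ (HD x ltac:(lra))) as U2. congruence.
Qed.

Definition Eexpr (a b g c1 c2 c3 w1 w2 v1 v2 t1 t2 s1 s2 : R) : R :=
 c1*(a*(w1^2+w2^2+v1^2+v2^2) + g*(v1*t1+v2*t2))
 + c2*(a*(t1^2+t2^2) - g*(v1*t1+v2*t2) + (s1^2+s2^2))
 + c3*(b*(t1^2+t2^2) - g*(v2*t1 - v1*t2)).

Lemma key (gamma : R) (bb : bc) (lam : C) (c1 c2 c3 : R) :
  W_eigenvalue gamma bb lam ->
  (forall w1 w2 v1 v2 t1 t2 s1 s2 : R,
     0 <= Eexpr (fst lam) (snd lam) gamma c1 c2 c3 w1 w2 v1 v2 t1 t2 s1 s2 /\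
     (Eexpr (fst lam) (snd lam) gamma c1 c2 c3 w1 w2 v1 v2 t1 t2 s1 s2 = 0 ->
       w1 = 0 /\ w2 = 0 /\ v1 = 0 /\ v2 = 0 /\ t1 = 0 /\ t2 = 0)) -> False.
Proof.
  intros [w [v [th [w' [v' [th' [th'' [HD [HE [HBu [HBt [x0 [Hx0 Hnz]]]]]]]]]]]]] Hc.
  set (G := fun x => c1 * (fst (v x) * fst (w x) + snd (v x) * snd (w x))
     + c2 * (fst (th' x) * fst (th x) + snd (th' x) * snd (th x))
     + c3 * (snd (th' x) * fst (th x) - fst (th' x) * snd (th x))).
  set (dG := fun x => c1 * ((fst (v' x) * fst (w x) + fst (v x) * fst (w' x))
        + (snd (v' x) * snd (w x) + snd (v x) * snd (w' x)))
     + c2 * ((fst (th'' x) * fst (th x) + fst (th' x) * fst (th' x))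
        + (snd (th'' x) * snd (th x) + snd (th' x) * snd (th' x)))
     + c3 * ((snd (th'' x) * fst (th x) + snd (th' x) * fst (th' x))
        - (fst (th'' x) * snd (th x) + fst (th' x) * snd (th' x)))).
  assert (HGd : forall x, 0 <= x <= PI -> is_derive G x (dG x)).
  { intros x Hx. destruct (HD x Hx) as [Dw [Dv [Dt Dt']]].
    apply der_fst in Dw as Dw1. apply der_snd in Dw as Dw2.
    apply der_fst in Dv as Dv1. apply der_snd in Dv as Dv2.
    apply der_fst in Dt as Dt1. apply der_snd in Dt as Dt2.
    apply der_fst in Dt' as Dt'1. apply der_snd in Dt' as Dt'2.
    unfold G, dG.
    repeat match goal with
    | |- is_derive (fun t => _ + _) _ _ => apply dplus
    | |- is_derive (fun t => _ - _) _ _ => apply dminus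
    | |- is_derive (fun t => c1 * _) _ _ => apply dscal
    | |- is_derive (fun t => c2 * _) _ _ => apply dscal
    | |- is_derive (fun t => c3 * _) _ _ => apply dscal
    | |- is_derive (fun t => _ * _) _ _ => apply dmul
    end; assumption. }
  assert (HdE : forall x, 0 < x < PI -> dG x = Eexpr (fst lam) (snd lam) gamma c1 c2 c3
     (fst (w x)) (snd (w x)) (fst (v x)) (snd (v x)) (fst (th x)) (snd (th x))
     (fst (th' x)) (snd (th' x))).
  { intros x Hx. generalize (HE x Hx). unfold dG, Eexpr.
    destruct (w x) as [w1 w2], (v x) as [v1 v2], (th x) as [t1 t2], (th' x) as [s1 s2],
      (w' x) as [w1' w2'], (v' x) as [v1' v2'], (th'' x) as [u1 u2], lam as [a b].
    unfold Cmult, Cminus, Cplus, Copp, RtoC; simpl.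
    intros [e1 [e2 e3]].
    injection e1 as e1a e1b. injection e2 as e2a e2b. injection e3 as e3a e3b.
    assert (f1 : w1' = a*v1 - b*v2 + gamma*t1) by lra.
    assert (f2 : w2' = a*v2 + b*v1 + gamma*t2) by lra.
    assert (f3 : u1 = a*t1 - b*t2 - gamma*v1) by lra.
    assert (f4 : u2 = a*t2 + b*t1 - gamma*v2) by lra.
    rewrite e1a, e1b, f1, f2, f3, f4. ring. }
  assert (G0 : G 0 = G PI).
  { unfold G.
    destruct bb; simpl in HBu, HBt; destruct HBu as [A1 A2]; destruct HBt as [B1 B2];
    rewrite ?A1, ?A2, ?B1, ?B2; unfold RtoC; cbn [fst snd]; ring. }
  assert (Hz := const_lemma G dG HGd
     (fun x Hx => ltac:(rewrite (HdE x Hx); apply Hc)) G0 x0 Hx0).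
  rewrite (HdE x0 Hx0) in Hz.
  destruct (proj2 (Hc _ _ _ _ _ _ _ _) Hz) as [z1 [z2 [z3 [z4 [z5 z6]]]]].
  destruct (w x0) as [w1 w2], (v x0) as [v1 v2], (th x0) as [t1 t2]; simpl in *; subst.
  destruct Hnz as [N|[N|N]]; apply N; reflexivity.
Qed.

Lemma sq0 x : x^2 = 0 -> x = 0.
Proof. intros H. simpl in H. rewrite Rmult_1_r in H. apply Rmult_integral in H. tauto. Qed.

Lemma alg_pos a b g w1 w2 v1 v2 t1 t2 s1 s2 : 0 < a ->
  0 <= Eexpr a b g 1 1 0 w1 w2 v1 v2 t1 t2 s1 s2 /\
  (Eexpr a b g 1 1 0 w1 w2 v1 v2 t1 t2 s1 s2 = 0 ->
    w1 = 0 /\ w2 = 0 /\ v1 = 0 /\ v2 = 0 /\ t1 = 0 /\ t2 = 0).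
Proof.
  intros Ha.
  assert (E : Eexpr a b g 1 1 0 w1 w2 v1 v2 t1 t2 s1 s2 =
     a*(w1^2+w2^2+v1^2+v2^2+t1^2+t2^2) + (s1^2+s2^2)) by (unfold Eexpr; ring).
  rewrite E. split.
  - assert (0 <= w1^2+w2^2+v1^2+v2^2+t1^2+t2^2) by nra. nra.
  - intros H.
    assert (0 <= s1^2+s2^2) by nra.
    assert (S : w1^2+w2^2+v1^2+v2^2+t1^2+t2^2 = 0) by nra.
    assert (w1^2 = 0 /\ w2^2 = 0 /\ v1^2 = 0 /\ v2^2 = 0 /\ t1^2 = 0 /\ t2^2 = 0)
      as (h1&h2&h3&h4&h5&h6) by (repeat split; nra).
    repeat split; nra.
Qed.

Lemma alg_hyp al b g sg w1 w2 v1 v2 t1 t2 s1 s2 : 0 < al -> sg * sg = 1 -> 0 < sg * b ->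
  g * g < al * (sg * b) ->
  0 <= Eexpr (-al) b g (-1) 0 sg w1 w2 v1 v2 t1 t2 s1 s2 /\
  (Eexpr (-al) b g (-1) 0 sg w1 w2 v1 v2 t1 t2 s1 s2 = 0 ->
    w1 = 0 /\ w2 = 0 /\ v1 = 0 /\ v2 = 0 /\ t1 = 0 /\ t2 = 0).
Proof.
  intros Ha Hs Hb Hg. set (be := sg * b) in *.
  assert (Hgg : 0 <= g*g) by nra.
  assert (Hc : 0 < al*be - g*g/2) by lra.
  set (Q := al*(v1^2+v2^2) + be*(t1^2+t2^2) - g*(v1*(t1 - sg*t2) + v2*(t2 + sg*t1))).
  assert (E : Eexpr (-al) b g (-1) 0 sg w1 w2 v1 v2 t1 t2 s1 s2 = al*(w1^2+w2^2) + Q)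
    by (unfold Eexpr, Q, be; ring).
  assert (SQ : al * Q = (al*v1 - g/2*(t1 - sg*t2))^2 + (al*v2 - g/2*(t2+sg*t1))^2
            + (al*be - g*g/2)*(t1^2+t2^2)).
  { 
    assert (K : (t1 - sg*t2)^2 + (t2+sg*t1)^2 = 2*(t1^2+t2^2)).
    { replace ((t1 - sg*t2)^2 + (t2+sg*t1)^2) with (t1^2+t2^2 + (sg*sg)*(t1^2+t2^2)) by ring.
      rewrite Hs. ring. }
    transitivity (al*Q + g*g/4*((t1 - sg*t2)^2 + (t2+sg*t1)^2 - 2*(t1^2+t2^2))).
    - rewrite K. ring.
    - unfold Q. field. }
  assert (Q0 : 0 <= Q).
  { assert (0 <= al * Q).
    { rewrite SQ. assert (0 <= t1^2+t2^2) by nra.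
      assert (0 <= (al*be - g*g/2)*(t1^2+t2^2)) by (apply Rmult_le_pos; lra).
      pose proof (pow2_ge_0 (al*v1 - g/2*(t1 - sg*t2))).
      pose proof (pow2_ge_0 (al*v2 - g/2*(t2+sg*t1))). lra. }
    destruct (Rle_or_lt 0 Q) as [h|h]; [exact h|]. 
    assert (al * Q < 0) by nra. lra. }
  rewrite E. split.
  - nra.
  - intros H.
    pose proof (pow2_ge_0 w1). pose proof (pow2_ge_0 w2).
    assert (0 <= al*(w1^2+w2^2)) by (apply Rmult_le_pos; lra).
    assert (W2 : Q = 0) by lra.
    assert (W1 : al*(w1^2+w2^2) = 0) by lra.
    assert (w1^2+w2^2 = 0) by (apply Rmult_integral in W1; destruct W1; lra).
    assert (w1 = 0) by (apply sq0; lra).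
    assert (w2 = 0) by (apply sq0; lra).
    rewrite W2, Rmult_0_r in SQ.
    pose proof (pow2_ge_0 t1). pose proof (pow2_ge_0 t2).
    pose proof (pow2_ge_0 (al*v1 - g/2*(t1 - sg*t2))).
    pose proof (pow2_ge_0 (al*v2 - g/2*(t2+sg*t1))).
    assert (0 <= (al*be - g*g/2)*(t1^2+t2^2)) by (apply Rmult_le_pos; lra).
    assert (T : (al*be - g*g/2)*(t1^2+t2^2) = 0) by lra.
    assert (t1^2 + t2^2 = 0) by (apply Rmult_integral in T; destruct T; lra).
    assert (t1 = 0) by (apply sq0; lra).
    assert (t2 = 0) by (apply sq0; lra). subst t1 t2.
    assert (A1 : (al*v1 - g/2*(0 - sg*0))^2 = 0) by lra.
    assert (A2 : (al*v2 - g/2*(0+sg*0))^2 = 0) by lra.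
    apply sq0 in A1, A2.
    assert (B1 : al*v1 = 0) by lra. assert (B2 : al*v2 = 0) by lra.
    apply Rmult_integral in B1. apply Rmult_integral in B2.
    repeat split; lra.
Qed.

Lemma eig_re gamma bb lam : W_eigenvalue gamma bb lam -> fst lam <= 0.
Proof.
  intros H. destruct (Rle_or_lt (fst lam) 0) as [h|h]; [exact h|].
  exfalso. apply (key gamma bb lam 1 1 0 H). intros. apply alg_pos. exact h.
Qed.

Lemma eig_hyp gamma bb lam : W_eigenvalue gamma bb lam ->
  Rabs (fst lam) * Rabs (snd lam) <= gamma * gamma.
Proof.
  intros H. pose proof (eig_re _ _ _ H) as Ha.
  destruct (Rle_or_lt (Rabs (fst lam) * Rabs (snd lam)) (gamma * gamma)) as [h|h]; [exact h|].
  exfalso.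
  assert (Hgg : 0 <= gamma * gamma) by nra.
  assert (Ha0 : fst lam <> 0).
  { intros E. rewrite E, Rabs_R0 in h. lra. }
  assert (Hb0 : snd lam <> 0).
  { intros E. rewrite E, Rabs_R0 in h. lra. }
  set (al := - fst lam).
  assert (Hal : 0 < al) by (unfold al; lra).
  assert (Ra : Rabs (fst lam) = al) by (unfold al; apply Rabs_left; lra).
  rewrite Ra in h.
  destruct (Rlt_or_le 0 (snd lam)) as [hb|hb].
  - rewrite Rabs_right in h by lra.
    apply (key gamma bb lam (-1) 0 1 H). intros.
    replace (fst lam) with (- al) by (unfold al; ring).
    apply alg_hyp; lra.
  - rewrite Rabs_left in h by lra.
    apply (key gamma bb lam (-1) 0 (-1) H). intros.
    replace (fst lam) with (- al) by (unfold al; ring).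
    apply alg_hyp; lra.
Qed.

Lemma cmod_le (z : C) : Cmod z <= Rabs (fst z) + Rabs (snd z).
Proof.
  unfold Cmod. rewrite <- (sqrt_pow2 (Rabs (fst z) + Rabs (snd z))).
  2: { pose proof (Rabs_pos (fst z)). pose proof (Rabs_pos (snd z)). lra. }
  apply sqrt_le_1_alt.
  pose proof (Rabs_pos (fst z)). pose proof (Rabs_pos (snd z)).
  assert (E1 : fst z ^ 2 = Rabs (fst z) ^ 2) by (rewrite <- !Rsqr_pow2; apply Rsqr_abs).
  assert (E2 : snd z ^ 2 = Rabs (snd z) ^ 2) by (rewrite <- !Rsqr_pow2; apply Rsqr_abs).
  rewrite E1, E2. nra.
Qed.

Theorem theorem4p3 (gamma : R) (hgamma : 0 < gamma) (b : bc) :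
  forall eps : R, 0 < eps ->
  exists R0 : R, forall lam : C,
    W_eigenvalue gamma b lam -> R0 < Cmod lam ->
    exists n : Z,
      Cmod (lam - Ci * RtoC (IZR n))%C <= eps * Rabs (IZR n) \/
      Cmod (lam + RtoC (IZR n ^ 2))%C <= eps * (IZR n ^ 2).
Proof.
  intros eps Heps.
  set (K := 2/eps + 2 + gamma*gamma + (3/eps+4)^2).
  assert (He2 : eps * (2/eps) = 2) by (field; lra).
  assert (He3 : eps * (3/eps) = 3) by (field; lra).
  assert (Hp2 : 0 < 2/eps) by (apply Rdiv_lt_0_compat; lra).
  assert (Hp3 : 0 < 3/eps) by (apply Rdiv_lt_0_compat; lra).
  assert (Hsq : 0 <= (3/eps+4)^2) by apply pow2_ge_0.
  exists (2*K). intros lam H HR.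
  pose proof (eig_hyp _ _ _ H) as Hab. pose proof (eig_re _ _ _ H) as Ha.
  pose proof (cmod_le lam) as Hc.
  destruct lam as [a bb]. simpl in Hab, Ha, Hc.
  assert (Hgg : 0 <= gamma*gamma) by nra.
  pose proof (Rabs_pos a). pose proof (Rabs_pos bb).
  destruct (Rle_or_lt (Rabs a) (Rabs bb)) as [C1|C1].
  - assert (Hb : Rabs bb > K) by lra.
    assert (Ha1 : Rabs a < 1).
    { destruct (Rlt_or_le (Rabs a) 1) as [h|h]; [exact h|]. unfold K in Hb. nra. }
    destruct (archimed bb) as [A1 A2].
    exists (up bb - 1)%Z. left. rewrite minus_IZR. simpl IZR.
    set (n := IZR (up bb) - 1) in *.
    eapply Rle_trans; [apply cmod_le|].
    unfold Cminus, Cmult, Ci, RtoC, Copp, Cplus; simpl.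
    assert (Hn : Rabs n > 2/eps + 1).
    { unfold K in Hb. revert Hb. unfold n. split_Rabs; lra. }
    assert (eps * (Rabs n - (2/eps + 1)) > 0) by (apply Rmult_gt_0_compat; lra).
    assert (Rabs (bb + - (0 * 0 + 1 * n)) < 1) by (unfold n; split_Rabs; lra).
    replace (a + - (0 * n - 1 * 0)) with a by ring. nra.
  - assert (Hal : - a > K) by (revert C1 Hc HR; split_Rabs; lra).
    assert (Hb1 : Rabs bb < 1).
    { destruct (Rlt_or_le (Rabs bb) 1) as [h|h]; [exact h|]. unfold K in Hal.
      rewrite (Rabs_left1 a) in Hab by lra. nra. }
    set (s := sqrt (-a)).
    assert (Hs0 : 0 <= s) by apply sqrt_pos.
    assert (Hss : s * s = -a) by (apply sqrt_sqrt; lra).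
    assert (Hs4 : s >= 3/eps + 4).
    { destruct (Rge_or_gt s (3/eps+4)) as [h|h]; [exact h|]. unfold K in Hal. nra. }
    destruct (archimed s) as [A1 A2].
    exists (up s - 1)%Z. right. rewrite minus_IZR. simpl IZR.
    set (n := IZR (up s) - 1) in *.
    assert (Hn1 : n <= s) by (unfold n; lra).
    assert (Hn2 : s < n + 1) by (unfold n; lra).
    eapply Rle_trans; [apply cmod_le|].
    unfold RtoC, Cplus; simpl.
    assert (Hn3 : n >= 3/eps + 3) by lra.
    assert (Hen : eps * n >= 3 + 3*eps).
    { assert (eps * (n - (3/eps+3)) >= 0) by (apply Rle_ge, Rmult_le_pos; lra). nra. }
    assert (E1 : Rabs (a + n * (n * 1)) <= 2*s).
    { rewrite Rabs_left1 by nra. nra. }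
    replace (bb + 0) with bb by ring. nra.
Qed.
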